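(* Let $f:\mathbb{R}^n\times\mathbb{R}^m\to\mathbb{R}$ and $g:\mathbb{R}^n\times\mathbb{R}^m\to\mathbb{R}^p$ be continuous. Assume that for every $x\in\mathbb{R}^n$, $f(x,\cdot)$ is strictly convex, $g(x,\cdot)$ is convex (componentwise), and the problem $\min_{u\in\mathbb{R}^m} f(x,u)$ subject to $g(x,u)\le 0$ has at least one minimizer; let $u^*(x)$ denote the (unique) minimizer. Assume moreover that local compact feasibility holds at every $x\in\mathbb{R}^n$. Then $u^*:\mathbb{R}^n\to\mathbb{R}^m$ is measurable (with respect to the Borel $\sigma$-algebras).
   Context: Local compact feasibility (LCF) holds at $x\in\mathbb{R}^n$ if there exist a compact set $K\subset\mathbb{R}^m$ and $\delta>0$ such that for all $y\in\mathbb{R}^n$ with $\|y-x\|<\delta$ there exists $u\in K$ with $g(y,u)\le 0$. *)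

(* Defs.v *)
From HB Require Import structures.
From mathcomp Require Import all_boot all_order all_algebra.
From mathcomp Require Import all_classical all_reals all_analysis.
Set Implicit Arguments. Unset Strict Implicit. Unset Printing Implicit Defensive.
Import Order.TTheory GRing.Theory Num.Theory.
Import numFieldNormedType.Exports.
Local Open Scope classical_set_scope.
Local Open Scope ring_scope.

Definition borel_sets (T : topologicalType) : set (set T) := <<s open >>.

Definition borel_measurable (T U : topologicalType) (h : T -> U) : Prop :=
  forall B : set U, borel_sets B -> borel_sets (h @^-1` B).

Definition strictly_convex_in_u (R : realType) (n m : nat)
  (f : 'rV[R]_n * 'rV[R]_m -> R) : Prop :=
  forall (x : 'rV[R]_n) (u v : 'rV[R]_m) (t : R), u != v -> 0 < t -> t < 1 ->
    f (x, t *: u + (1 - t) *: v) < t * f (x, u) + (1 - t) * f (x, v).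

Definition convex_in_u (R : realType) (n m p : nat)
  (g : 'rV[R]_n * 'rV[R]_m -> 'rV[R]_p) : Prop :=
  forall (i : 'I_p) (x : 'rV[R]_n) (u v : 'rV[R]_m) (t : R), 0 <= t -> t <= 1 ->
    g (x, t *: u + (1 - t) *: v) ord0 i
      <= t * g (x, u) ord0 i + (1 - t) * g (x, v) ord0 i.

Definition feasible (R : realType) (n m p : nat)
  (g : 'rV[R]_n * 'rV[R]_m -> 'rV[R]_p) (x : 'rV[R]_n) (u : 'rV[R]_m) : Prop :=
  forall i : 'I_p, g (x, u) ord0 i <= 0.

Definition is_minimizer (R : realType) (n m p : nat)
  (f : 'rV[R]_n * 'rV[R]_m -> R) (g : 'rV[R]_n * 'rV[R]_m -> 'rV[R]_p)
  (x : 'rV[R]_n) (u : 'rV[R]_m) : Prop :=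
  feasible g x u /\ forall v : 'rV[R]_m, feasible g x v -> f (x, u) <= f (x, v).

Definition LCF (R : realType) (n m p : nat)
  (g : 'rV[R]_n * 'rV[R]_m -> 'rV[R]_p) (x : 'rV[R]_n) : Prop :=
  exists (K : set 'rV[R]_m) (delta : R), compact K /\ 0 < delta /\
    forall y : 'rV[R]_n, `|y - x| < delta -> exists2 u, K u & feasible g y u.

(* Main.v *)
Require Import Defs.
From HB Require Import structures.
From mathcomp Require Import all_boot all_order all_algebra.
From mathcomp Require Import all_classical all_reals all_analysis.
From mathcomp Require Import lra.
Import Order.TTheory GRing.Theory Num.Theory.
Import numFieldNormedType.Exports.
Local Open Scope classical_set_scope.
Local Open Scope ring_scope.
Section Aux.
Variables (R : realType) (n m p : nat).
Variables (f : 'rV[R]_n * 'rV[R]_m -> R) (g : 'rV[R]_n * 'rV[R]_m -> 'rV[R]_p).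
Hypotheses (fc : continuous f) (gc : continuous g).

Definition ball_set (k : nat) (q : nat) : set 'rV[R]_q := [set v | `|v| <= k%:R].

Lemma ball_set_compact k q : compact (ball_set k q).
Proof.
apply: bounded_closed_compact.
  exists k%:R; split; first by rewrite num_real.
  by move=> M kM v; rewrite /ball_set /= => vk; apply: (le_trans vk); apply: ltW.
have -> : ball_set k q = (fun v : 'rV[R]_q => `|v|) @^-1` [set r : R | r <= k%:R] by [].
apply: preimage_closed.
  by move=> x _; apply: norm_continuous.
exact: closed_le.
Qed.

Definition Zset (c : R) : set ('rV[R]_n * 'rV[R]_m) :=
  [set z | feasible g z.1 z.2 /\ f z <= c].

Lemma Zset_closed c : closed (Zset c).
Proof.
have -> : Zset c = (\bigcap_(i in setT) ((fun z => g z ord0 i) @^-1` [set r : R | r <= 0]))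
   `&` (f @^-1` [set r : R | r <= c]).
  apply/seteqP; split => -[a b] /=.
    by move=> [zf zc]; split => // i _; exact: (zf i).
  by move=> [zf zc]; split => // i; exact: (zf i I).
apply: closedI.
  apply: closed_bigI => i _; apply: preimage_closed; last exact: closed_le.
  move=> z _.
  exact: (@continuous_comp _ _ _ g (fun M : 'rV[R]_p => M ord0 i) z (gc z) (@coord_continuous _ _ _ _ _ (g z))).
apply: preimage_closed; last exact: closed_le.
by move=> z _; apply: fc.
Qed.

Definition MX (q : nat) := g_sigma_algebraType (@open 'rV[R]_q).

Lemma closed_meas q (A : set 'rV[R]_q) : closed A -> @measurable _ (MX q) A.
Proof.
move=> cA; rewrite -[A]setCK; apply: measurableC.
apply: sub_sigma_algebra; rewrite /=.
by rewrite -closedC setCK.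
Qed.

Definition Pset (K : set 'rV[R]_m) (c : R) : set 'rV[R]_n :=
  [set x | exists u, K u /\ feasible g x u /\ f (x, u) <= c].

Lemma fst_cont : continuous (fst : 'rV[R]_n * 'rV[R]_m -> 'rV[R]_n).
Proof. by move=> z; exact: cvg_fst. Qed.

Lemma Pset_meas K c : compact K -> @measurable _ (MX n) (Pset K c).
Proof.
move=> cK.
have -> : Pset K c = \bigcup_k (fst @` ((ball_set k n `*` K) `&` Zset c)).
  apply/seteqP; split => x /=.
    move=> [u [Ku [fu fc']]].
    have [k kx] : exists k : nat, `|x| <= k%:R.
      by exists (Num.trunc `|x|).+1; apply: ltW; exact: truncnS_gt.
    by exists k => //; exists (x, u) => //.
  by move=> [k _ [[a b] [[/= ka Kb] [fb fbc]]] /= <-]; exists b.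
apply: bigcupT_measurable => k; apply: closed_meas.
apply: compact_closed; first exact: norm_hausdorff.
apply: continuous_compact.
  by apply: continuous_subspaceT; exact: fst_cont.
apply: compact_closedI; last exact: Zset_closed.
by apply: compact_setX => //; exact: ball_set_compact.
Qed.

Definition iv (j : nat) : R := (j.+1%:R)^-1.
Lemma iv_gt0 j : 0 < iv j.
Proof. by rewrite /iv invr_gt0. Qed.

Lemma small_inv (e : R) : 0 < e -> exists j : nat, iv j < e.
Proof.
rewrite /iv.
move=> e0; exists (Num.trunc e^-1); rewrite invf_plt ?posrE ?invr_gt0//; exact: truncnS_gt.
Qed.

Lemma min_unique x u v : strictly_convex_in_u f -> convex_in_u g ->
  is_minimizer f g x u -> is_minimizer f g x v -> u = v.
Proof.
move=> sc cg [fu mu] [fv mv]; apply/eqP; apply/negPn/negP => uv.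
set t : R := 2^-1.
have t0 : 0 < t by rewrite invr_gt0.
have t1 : t < 1 by rewrite invf_lt1 // ltr1n.
set w := t *: u + (1 - t) *: v.
have fw : feasible g x w.
  move=> i; apply: le_trans (cg i x u v t (ltW t0) (ltW t1)) _.
  have := fu i; have := fv i; nra.
have := sc x u v t uv t0 t1; have := mu w fw; have := mv w fw.
rewrite -/w; nra.
Qed.

Lemma le_of_inv (a b : R) : (forall j : nat, a < b + iv j) -> a <= b.
Proof.
move=> H; rewrite leNgt; apply/negP => ba.
have [j hj] := small_inv (a - b) (ltac:(by rewrite subr_gt0)).
have := H j; lra.
Qed.

Variable ustar : 'rV[R]_n -> 'rV[R]_m.
Hypothesis hmin : forall x, is_minimizer f g x (ustar x).

Definition Lt (r : R) : set 'rV[R]_n := [set x | f (x, ustar x) < r].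

Lemma Lt_meas r : @measurable _ (MX n) (Lt r).
Proof.
have -> : Lt r = \bigcup_k \bigcup_j Pset (ball_set k m) (r - iv j).
  apply/seteqP; split => x /=.
    move=> Vr.
    have [j hj] := small_inv (r - f (x, ustar x)) (ltac:(by rewrite subr_gt0)).
    exists (Num.trunc `|ustar x|).+1 => //; exists j => //; exists (ustar x).
    split; first by apply: ltW; exact: truncnS_gt.
    split; first exact: (hmin x).1.
    lra.
  move=> [k _ [j _ [u [_ [fu le]]]]].
  have := (hmin x).2 u fu.
  have := iv_gt0 j.
  rewrite /Lt /=; lra.
apply: bigcupT_measurable => k; apply: bigcupT_measurable => j.
apply: Pset_meas; exact: ball_set_compact.
Qed.

Definition Le (c : R) : set 'rV[R]_n := [set x | f (x, ustar x) <= c].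

Lemma Le_meas c : @measurable _ (MX n) (Le c).
Proof.
have -> : Le c = \bigcap_j Lt (c + iv j).
  apply/seteqP; split => x /=.
    move=> Vc j _; rewrite /Lt /=.
    have := iv_gt0 j.
    move: Vc; rewrite /Le /=; lra.
  by move=> H; apply: le_of_inv => j; exact: (H j I).
apply: bigcapT_measurable => j; exact: Lt_meas.
Qed.

Definition Eset (K : set 'rV[R]_m) (e : R) : set 'rV[R]_n :=
  [set x | exists u, K u /\ feasible g x u /\ f (x, u) < f (x, ustar x) + e].

Lemma Eset_meas K e : compact K -> @measurable _ (MX n) (Eset K e).
Proof.
move=> cK.
have -> : Eset K e = \bigcup_(q : rat) (Pset K (ratr q) `&` ~` Le (ratr q - e)).
  apply/seteqP; split => x /=.
    move=> [u [Ku [fu lt]]].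
    have [q] := rat_in_itvoo lt; rewrite in_itv /= => /andP[q1 q2].
    exists q => //; split.
      by exists u; split => //; split => //; apply: ltW.
    rewrite /Le /= => le; lra.
  move=> [q _ [[u [Ku [fu le]]] nle]].
  exists u; split => //; split => //.
  move: nle; rewrite /Le /= => /negP; rewrite -ltNge; lra.
apply: bigcupT_measurable_rat => q; apply: measurableI.
  exact: Pset_meas.
apply: measurableC; exact: Le_meas.
Qed.

Hypotheses (sc : strictly_convex_in_u f) (cg : convex_in_u g).

Lemma compact_preimage K : compact K -> @measurable _ (MX n) (ustar @^-1` K).
Proof.
move=> cK.
have -> : ustar @^-1` K = \bigcap_k Eset K (iv k).
  apply/seteqP; split => x /=.
    move=> Kx k _; exists (ustar x); split => //; split; first exact: (hmin x).1.
    have := iv_gt0 k; lra.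
  move=> H.
  set V := f (x, ustar x).
  set S := ([set x] `*` K) `&` Zset (V + 1).
  have iv1 k : iv k <= 1.
    by rewrite /iv invf_le1 // ?ler1n // ltr0Sn.
  have inS k : exists u, S (x, u) /\ f (x, u) < V + iv k.
    have [u [Ku [fu lt]]] := H k I.
    exists u; split => //; split => //; split => //=.
    have := iv1 k.
    rewrite /V; lra.
  have S0 : S !=set0 by have [u [Su _]] := inS 0%N; exists (x, u).
  have cS : compact S.
    apply: compact_closedI; last exact: Zset_closed.
    by apply: compact_setX => //; exact: compact_set1.
  have [[a u] Sau hu] := compact_EVT_min S0 cS (continuous_subspaceT fc).
  move: Sau; rewrite inE => -[[/= ax Ku] [fu _]].
  subst a.
  have fle : f (x, u) <= V.
    apply: le_of_inv => k; have [w [Sw lt]] := inS k.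
    have := hu (x, w); rewrite inE => /(_ Sw); lra.
  have mu : is_minimizer f g x u.
    split => // v fv; apply: le_trans fle _; exact: (hmin x).2 v fv.
  by rewrite (@min_unique x (ustar x) u sc cg (hmin x) mu).
apply: bigcapT_measurable => k; exact: Eset_meas.
Qed.

Lemma closed_preimage F : closed F -> @measurable _ (MX n) (ustar @^-1` F).
Proof.
move=> cF.
have -> : ustar @^-1` F = \bigcup_k ustar @^-1` (ball_set k m `&` F).
  apply/seteqP; split => x /=.
    move=> Fx; exists (Num.trunc `|ustar x|).+1 => //; split => //.
    by apply: ltW; exact: truncnS_gt.
  by move=> [k _ [_ Fx]].
apply: bigcupT_measurable => k; apply: compact_preimage.
apply: compact_closedI => //; exact: ball_set_compact.
Qed.

Lemma open_preimage D : open D -> @measurable _ (MX n) (ustar @^-1` D).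
Proof.
move=> oD; rewrite -[D]setCK -preimage_setC; apply: measurableC.
by apply: closed_preimage; exact: open_closedC.
Qed.

Lemma ustar_borel : borel_measurable ustar.
Proof.
have mf : measurable_fun (setT : set (MX n)) (ustar : MX n -> MX m).
  apply: (@measurability _ _ (MX n) (MX m) setT ustar (@open _)) => //.
  by move=> _ [B oB <-]; rewrite setTI; exact: open_preimage.
move=> B hB; have := mf measurableT B hB; rewrite setTI; exact.
Qed.

End Aux.

Theorem proposition3p8 (R : realType) (n m p : nat)
  (f : 'rV[R]_n * 'rV[R]_m -> R) (g : 'rV[R]_n * 'rV[R]_m -> 'rV[R]_p)
  (ustar : 'rV[R]_n -> 'rV[R]_m) :
  continuous f -> continuous g ->
  strictly_convex_in_u f -> convex_in_u g ->
  (forall x, exists u, is_minimizer f g x u) ->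
  (forall x, is_minimizer f g x (ustar x)) ->
  (forall x, LCF g x) ->
  borel_measurable ustar.
Proof.
move=> fc gc sc cg _ hmin _.
exact: (@ustar_borel R n m p f g fc gc ustar hmin sc cg).
Qed.
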